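(* Let $N\ge2$, let $q\in\mathbb{C}$ with $[k]_q\ne0$ for $1\le k\le N$, and let $z_1,\dots,z_N$ lie in the open unit disk. Fix $\sigma\in\mathbb{S}_N$. For $1\le i\le N-1$ let $T_i:\mathbb{S}_N\to\mathbb{S}_N$ be the map $T_i\sigma=\tilde\sigma$ with $\tilde\sigma(N-i)=\sigma(N-i+1)$, $\tilde\sigma(N-i+1)=\sigma(N-i)$ and $\tilde\sigma(k)=\sigma(k)$ otherwise, and let $T_0$ be the identity. Then $$\sum_{i=0}^{N-1}q^i\,F^{(N)}_{(T_i\cdots T_0)\sigma}\Big|_{z_{\sigma(N)}=0}=F^{(N-1)}_{\sigma'},$$ where $F^{(N-1)}_{\sigma'}:=\Phi_{N-1}(z_{\sigma(1)},\dots,z_{\sigma(N-1)})$.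
   Context: $[k]_q=1+q+\cdots+q^{k-1}$, $[k]_q!=[1]_q\cdots[k]_q$. For $M\ge1$ and $w_1,\dots,w_M$ in the open unit disk define $t_i=\dfrac{w_1\cdots w_{M-i}}{1-w_1\cdots w_{M-i}}$ for $1\le i\le M-1$ and $$\Phi_M(w_1,\dots,w_M)=\frac{1}{1-w_1\cdots w_M}\sum_{(m_1,\dots,m_n)}\frac{1}{[m_1]_q!\cdots[m_n]_q!}\,t_{m_1}t_{m_1+m_2}\cdots t_{m_1+\cdots+m_{n-1}},$$ the sum running over all compositions $(m_1,\dots,m_n)$ of $M$ (ordered tuples of positive integers summing to $M$, any $n\ge1$; for $n=1$ the product of $t$'s is $1$). For $\sigma\in\mathbb{S}_M$ set $F^{(M)}_\sigma=\Phi_M(z_{\sigma(1)},\dots,z_{\sigma(M)})$. *)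

(* Defs.v *)
From HB Require Import structures.
From mathcomp Require Import all_boot all_order all_algebra all_fingroup.
Set Implicit Arguments. Unset Strict Implicit. Unset Printing Implicit Defensive.
Import Order.TTheory GRing.Theory Num.Theory.
Local Open Scope ring_scope.

Section Defs.
Variable R : fieldType.

Definition qint (q : R) (k : nat) : R := \sum_(i < k) q ^+ i.

Definition qfact (q : R) (k : nat) : R := \prod_(1 <= j < k.+1) qint q j.

Definition tvar (w : seq R) (i : nat) : R :=
  let P := \prod_(x <- take (size w - i) w) x in P / (1 - P).

(* Compositions (m_1,...,m_n) of M are
   enumerated as n-tuples (n <= M) of positive integers <= M summing to M;
   the product of t's is t_{m_1} t_{m_1+m_2} ... t_{m_1+...+m_{n-1}}. *)
Definition Phi (q : R) (w : seq R) : R :=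
  let M := size w in
  (1 - \prod_(x <- w) x)^-1 *
  \sum_(n < M.+1)
    \sum_(t : n.-tuple 'I_M.+1 |
            all (fun i : 'I_M.+1 => 0 < (i : nat))%N t
            && (sumn (map val t) == M)%N)
      ((\prod_(m <- t) (qfact q m)^-1) *
       \prod_(1 <= j < n) tvar w (sumn (take j (map val t)))).

(* T_i on S_N with N = n.+2 (1-based description in the paper: swap the
   values at positions N-i and N-i+1, i.e. 0-based positions N-i-1, N-i);
   T_0 = identity.  (tperm a b * s) k = s (tperm a b k). *)
Definition Tmap (n : nat) (i : nat) (s : 'S_n.+2) : 'S_n.+2 :=
  if i == 0%N then s
  else (tperm (inord (n.+1 - i)) (inord (n.+2 - i)) * s)%g.

Fixpoint Tcomp (n : nat) (i : nat) (s : 'S_n.+2) {struct i} : 'S_n.+2 :=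
  match i with
  | O => Tmap 0%N s
  | i'.+1 => Tmap i'.+1 (Tcomp i' s)
  end.

Definition F (n : nat) (q : R) (z : 'I_n.+2 -> R) (s : 'S_n.+2) : R :=
  Phi q [seq z (s k) | k <- enum 'I_n.+2].

End Defs.

(* Main.v *)
Require Import Defs.
From HB Require Import structures.
From mathcomp Require Import all_boot all_order all_algebra all_fingroup.
From mathcomp Require Import zify.
Set Implicit Arguments. Unset Strict Implicit. Unset Printing Implicit Defensive.
Import Order.TTheory GRing.Theory Num.Theory.
Local Open Scope ring_scope.

Definition Ls (M k : nat) : seq (seq nat) :=
  [seq map val (tval t) | t <- enum [pred t : k.-tuple 'I_M.+1 |
     all (fun i : 'I_M.+1 => 0 < (i : nat))%N t && (sumn (map val t) == M)%N]].

Definition Lc (M : nat) : seq (seq nat) := [seq x | k <- iota 0 M.+1, x <- Ls M k].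

Lemma mem_le_sumn (s : seq nat) x : x \in s -> (x <= sumn s)%N.
Proof.
elim: s => //= y s IH; rewrite inE => /orP[/eqP->|/IH]; first exact: leq_addr.
by move=> h; apply: leq_trans h (leq_addl _ _).
Qed.

Lemma size_le_sumn (s : seq nat) : all (fun x => 0 < x)%N s -> (size s <= sumn s)%N.
Proof.
elim: s => //= y s IH /andP[hy /IH h]; by rewrite -add1n leq_add.
Qed.

Lemma mem_Ls M k s : (s \in Ls M k) = [&& size s == k, all (fun x => 0 < x)%N s & sumn s == M].
Proof.
apply/idP/idP.
  case/mapP=> t; rewrite mem_enum inE => /andP[h1 h2] ->.
  by rewrite size_map size_tuple eqxx all_map h2 andbT.
case/and3P=> /eqP hk hpos /eqP hsum.
have hle : forall x, x \in s -> (x < M.+1)%N.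
  by move=> x /mem_le_sumn; rewrite hsum ltnS.
have hsz : size (map (@inord M) s) == k by rewrite size_map hk.
apply/mapP; exists (Tuple hsz).
  rewrite mem_enum inE /=.
  have -> : map val (map (@inord M) s) = s.
    rewrite -map_comp -{2}(map_id s); apply/eq_in_map => x /hle hx /=.
    by rewrite inordK.
  rewrite hsum eqxx andbT all_map.
  by apply/allP => x hx /=; rewrite inordK ?hle //; move/allP: hpos; apply.
rewrite /= -map_comp -{1}(map_id s); apply/esym/eq_in_map => x /hle hx /=.
by rewrite inordK.
Qed.

Lemma mem_Lc M s : (s \in Lc M) = all (fun x => 0 < x)%N s && (sumn s == M).
Proof.
apply/idP/idP.
  by case/allpairsPdep=> k [x [_ + ->]]; rewrite mem_Ls => /and3P[_ -> ->].
move=> /andP[hpos hsum]; apply/allpairsPdep; exists (size s), s; split => //.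
  rewrite mem_iota /= ltnS -(eqP hsum); exact: size_le_sumn.
by rewrite mem_Ls eqxx hpos hsum.
Qed.

Lemma uniq_Ls M k : uniq (Ls M k).
Proof.
rewrite map_inj_uniq ?enum_uniq // => t1 t2 h.
by apply: val_inj; apply: (inj_map val_inj).
Qed.

Lemma uniq_Lc M : uniq (Lc M).
Proof.
apply: allpairs_uniq_dep; first exact: iota_uniq.
  by move=> k _; exact: uniq_Ls.
move=> [k1 x1] [k2 x2] /allpairsPdep[a [b [_ hb [-> ->]]]]
   /allpairsPdep[c [d [_ hd [-> ->]]]] /= hbd.
move: hb hd; rewrite !mem_Ls hbd => /and3P[/eqP <- _ _] /and3P[/eqP <- _ _].
by [].
Qed.

Definition incr (c : seq nat) : seq nat :=
  match c with [::] => [:: 1%N] | m :: r => m.+1 :: r end.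

Lemma Lc_split m : perm_eq (Lc m.+2)
  ([seq incr c | c <- Lc m.+1] ++ [seq 1%N :: c | c <- Lc m.+1]).
Proof.
apply: uniq_perm; first exact: uniq_Lc.
  rewrite cat_uniq !map_inj_in_uniq ?uniq_Lc //=; last 2 first.
  - by move=> c d _ _ [].
  - move=> c d; rewrite !mem_Lc.
    case: c => [|a c] /=; first done.
    by case: d => [|b d] /=; [done| move=> _ _ [-> ->]].
  rewrite andbT; apply/hasPn => x /mapP[c _ ->]; apply/mapP => -[d].
  by rewrite mem_Lc; case: d => [|[|a] d] //=; rewrite andbF.
move=> s; rewrite mem_Lc mem_cat; apply/idP/idP.
  case: s => [|[|[|a]] s] //= /andP[hs /eqP [hsum]].
  - apply/orP; right; apply/mapP; exists s => //; rewrite mem_Lc hs.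
    by move: hsum; rewrite add0n => ->; rewrite eqxx.
  - apply/orP; left; apply/mapP; exists (a.+1 :: s) => //.
    by rewrite mem_Lc /= hs addSn hsum eqxx.
case/orP=> /mapP[c]; rewrite mem_Lc => /andP[hc /eqP hsum] ->.
  case: c hc hsum => [|a c] /=; first by [].
  by move=> /andP[_ ->]; rewrite addSn => ->; rewrite eqxx.
by rewrite /= hc hsum add1n eqxx.
Qed.

Definition Wt (R : fieldType) (q : R) (s : seq nat) : R := \prod_(m <- s) (qfact q m)^-1.
Definition TT (R : fieldType) (t : nat -> R) (s : seq nat) : R :=
  \prod_(1 <= j < size s) t (sumn (take j s)).

Lemma Phi_Lc (R : fieldType) (q : R) (w : seq R) :
  Phi q w = (1 - \prod_(x <- w) x)^-1 *
    \sum_(c <- Lc (size w)) Wt q c * TT (tvar w) c.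
Proof.
rewrite /Phi /Lc big_allpairs_dep; congr (_ * _).
rewrite -(big_mkord xpredT (fun k => \sum_(t : k.-tuple 'I_(size w).+1 |
   all (fun i : 'I_(size w).+1 => 0 < (i : nat))%N t
            && (sumn (map val t) == size w)%N)
      ((\prod_(m <- t) (qfact q m)^-1) *
       \prod_(1 <= j < k) tvar w (sumn (take j (map val t)))))).
rewrite /index_iota subn0; apply: eq_bigr => k _.
rewrite /Ls big_map big_enum_cond /=.
apply: eq_big => [t|t _]; first by rewrite andbT.
by rewrite /Wt /TT big_map size_map size_tuple /index_iota.
Qed.

Lemma Tcomp_spec n (s : 'S_n.+2) i : (i <= n.+1)%N -> forall k : 'I_n.+2,
  ((k < n.+1 - i)%N -> Tcomp i s k = s k) /\
  ((k : nat) = (n.+1 - i)%N -> Tcomp i s k = s ord_max).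
Proof.
elim: i => [|i IH] hi k.
  rewrite /= /Tmap /= subn0; split => // hk; congr (s _); exact: val_inj.
have {}IH := IH (ltnW hi).
rewrite /= /Tmap /= permM.
have ha : (n - i < n.+2)%N by rewrite ltnS (leq_trans (leq_subr _ _)).
have hb : (n.+1 - i < n.+2)%N by rewrite ltnS leq_subr.
have vi : (n.+1 - i.+1 = n - i)%N by rewrite subSS.
have vb : (n.+2 - i.+1 = n.+1 - i)%N by rewrite subSS.
rewrite vi vb; split => hk.
  rewrite tpermD; first by apply: (proj1 (IH k)); apply: (ltn_trans hk); rewrite subSn // -ltnS.
  - by apply/negP => /eqP /(congr1 val) /=; rewrite inordK // => e; rewrite -e ltnn in hk.
  - apply/negP => /eqP /(congr1 val) /=; rewrite inordK // => e.
    by rewrite -e ltnNge (leq_sub2r _ (leqnSn n)) in hk. 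
have -> : k = inord (n - i) by apply: val_inj; rewrite /= inordK.
rewrite tpermL; apply: (proj2 (IH _)); by rewrite /= inordK.
Qed.

Lemma list_iota (R : Type) n (f : 'I_n.+1 -> R) :
  [seq f k | k <- enum 'I_n.+1] = [seq f (inord k) | k <- iota 0 n.+1].
Proof. by rewrite -val_enum_ord -map_comp; apply: eq_map => k /=; rewrite inord_val. Qed.

Lemma prefix_prod (R : fieldType) (f : nat -> R) j m :
  \prod_(x <- take j (map f (iota 0 m))) x = \prod_(0 <= l < minn j m) f l.
Proof. by rewrite -map_take take_iota big_map /index_iota subn0. Qed.

Lemma prod0 (R : fieldType) (f : nat -> R) m l0 :
  (l0 < m)%N -> f l0 = 0 -> \prod_(0 <= l < m) f l = 0.
Proof. by move=> hl hf; rewrite big_mkord (bigD1 (Ordinal hl)) //= hf mul0r. Qed.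

Lemma TT_cond (R : fieldType) (t : nat -> R) (i N : nat) (c : seq nat) :
  c \in Lc N -> (i < N)%N ->
  TT (fun k => if (i < k)%N then t k else 0) c = if (i < head 0%N c)%N then TT t c else 0.
Proof.
rewrite mem_Lc; case: c => [|a r] /=; first by move=> /eqP <-.
move=> /andP[_ /eqP hs] hiN; rewrite /TT /=.
case: ifP => hia.
  apply: eq_big_nat => j /andP[hj _]; case: j hj => // j _ /=.
  by rewrite ifT // ltn_addr.
case: r hs => [|b r] hs.
  by rewrite /= addn0 in hs; rewrite hs hiN in hia.
rewrite big_nat_recl //= addn0 hia mul0r //.
Qed.

Lemma norm_prod_lt1 (R : numClosedFieldType) (A : nat -> R) (hA : forall l, `|A l| < 1) m :
  `|\prod_(0 <= l < m.+1) A l| < 1.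
Proof.
rewrite normr_prod; elim: m => [|m IH]; first by rewrite big_nat1.
rewrite big_nat_recr //= mulr_ilt1 //; apply: prodr_ge0 => l _; exact: normr_ge0.
Qed.

Theorem lemma5 (R : numClosedFieldType) (n : nat) (q : R)
  (hq : forall k : nat, (1 <= k <= n.+2)%N -> qint q k != 0)
  (z : 'I_n.+2 -> R) (hz : forall j, `|z j| < 1)
  (s : 'S_n.+2) :
  \sum_(i < n.+2)
     q ^+ i * F q (fun j => if j == s ord_max then 0 else z j) (Tcomp i s)
  = Phi q [seq z (s k) | k <- take n.+1 (enum 'I_n.+2)].
Proof.
set zz := fun j => if j == s ord_max then 0 else z j.
pose A : nat -> R := fun l => z (s (inord l)).
pose PA m := \prod_(0 <= l < m) A l.
pose tA k := PA (n.+2 - k)%N / (1 - PA (n.+2 - k)%N).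
have zzA : forall l, (l < n.+1)%N -> zz (s (inord l)) = A l.
  move=> l hl; rewrite /zz (inj_eq perm_inj) ifF //; apply/negP => /eqP /(congr1 val).
  by rewrite /= inordK ?(ltn_trans hl) // => e; rewrite e ltnn in hl.
have Fi : forall i : 'I_n.+2, F q zz (Tcomp i s) =
    \sum_(c <- Lc n.+2) Wt q c * TT (fun k => if (i < k)%N then tA k else 0) c.
  move=> i; have hi := ltn_ord i; rewrite ltnS in hi.
  have Tsp := Tcomp_spec s hi.
  have hl0 : (n.+1 - i < n.+2)%N by rewrite ltnS leq_subr.
  have f0 : zz (Tcomp i s (inord (n.+1 - i))) = 0.
    by rewrite (proj2 (Tsp _)) ?inordK // /zz eqxx.
  rewrite /F Phi_Lc list_iota size_map size_iota.
  have -> : \prod_(x <- [seq zz (Tcomp i s (inord k)) | k <- iota 0 n.+2]) x = 0.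
    rewrite -(take_size [seq zz (Tcomp i s (inord k)) | k <- iota 0 n.+2]).
    rewrite size_map size_iota prefix_prod minnn.
    exact: prod0 hl0 f0.
  rewrite oppr0 addr0 invr1 mul1r; apply: eq_big_seq => c _; congr (_ * _).
  apply: eq_bigr => j _; rewrite /tvar; cbv zeta; rewrite size_map size_iota prefix_prod.
  rewrite (minn_idPl (leq_subr _ _)); case: ifP => hik.
    have -> : \prod_(0 <= l < n.+2 - sumn (take j c)) zz (Tcomp i s (inord l)) =
              PA (n.+2 - sumn (take j c))%N.
      apply: eq_big_nat => l /andP[_ hl].
      have hl' : (l < n.+1 - i)%N by move: hik hl; set S := sumn _; lia.
      rewrite (proj1 (Tsp _)) ?inordK ?zzA //; lia.
    by [].
  rewrite (prod0 (l0 := (n.+1 - i)%N)) ?mul0r //.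
  by move: hik => /negbT; rewrite -leqNgt; lia.
have RHS : Phi q [seq z (s k) | k <- take n.+1 (enum 'I_n.+2)] =
    (1 - PA n.+1)^-1 * \sum_(c <- Lc n.+1) Wt q c * TT (fun k => tA k.+1) c.
  rewrite map_take list_iota -map_take take_iota (minn_idPl (leqnSn _)).
  rewrite Phi_Lc size_map size_iota; congr (_ * _).
    by rewrite big_map /PA /index_iota subn0.
  apply: eq_big_seq => c _; congr (_ * _); apply: eq_bigr => j _.
  rewrite /tvar; cbv zeta; rewrite size_map size_iota prefix_prod.
  by rewrite (minn_idPl (leq_subr _ _)) /tA subSS.
rewrite RHS.
under eq_bigr => i _ do rewrite Fi big_distrr.
rewrite exchange_big /=.
have step : forall c, c \in Lc n.+2 ->
    \sum_(i < n.+2) q ^+ i * (Wt q c * TT (fun k => if (i < k)%N then tA k else 0) c)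
    = qint q (head 0%N c) * (Wt q c * TT tA c).
  move=> c hc.
  have hh : (head 0%N c <= n.+2)%N.
    move: hc; rewrite mem_Lc; case: c => [|a r] //= /andP[_ /eqP <-]; exact: leq_addr.
  under eq_bigr => i _ do rewrite (TT_cond tA hc (ltn_ord i)).
  rewrite /qint (big_ord_widen _ _ hh) big_distrl /= (big_mkcond (fun i : 'I_n.+2 => (i < head 0 c)%N)).
  by apply: eq_bigr => i _; case: ifP => _; rewrite ?mulr0 ?mul0r.
rewrite (eq_big_seq _ step).
have hperm : \sum_(c <- Lc n.+2) qint q (head 0%N c) * (Wt q c * TT tA c) =
  \sum_(c <- [seq incr c | c <- Lc n.+1] ++ [seq 1%N :: c | c <- Lc n.+1])
     qint q (head 0%N c) * (Wt q c * TT tA c) := perm_big _ (Lc_split n).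
rewrite hperm big_cat /= !big_map -big_split big_distrr /=.
apply: eq_big_seq => c hc.
have hz' : forall l, `|A l| < 1 by move=> l; exact: hz.
have hP : 1 - PA n.+1 != 0.
  apply/negP => /eqP /subr0_eq h; have := norm_prod_lt1 hz' n.
  by rewrite -/(PA n.+1) -h normr1 ltxx.
have ht1 : 1 + tA 1%N = (1 - PA n.+1)^-1.
  rewrite /tA subSS subn0 -{1}(divff hP) -mulrDl subrK mul1r //.
move: hc; rewrite mem_Lc; case: c => [|a r] //= /andP[/andP[ha hr] /eqP hs].
have haN : (1 <= a.+1 <= n.+2)%N by rewrite /= ltnS -hs leq_addr.
have g1 : qint q a.+1 * (Wt q (a.+1 :: r) * TT tA (a.+1 :: r)) =
          Wt q (a :: r) * TT (fun k => tA k.+1) (a :: r).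
  have e1 : qint q a.+1 * (qfact q a.+1)^-1 = (qfact q a)^-1.
    by rewrite /qfact big_nat_recr //= invfM mulrCA mulfV ?mulr1 // hq.
  rewrite /Wt !big_cons !mulrA e1; congr (_ * _).
  rewrite /TT /=; apply: eq_big_nat => j /andP[hj _]; case: j hj => // j _ /=.
have g2 : qint q 1 * (Wt q [:: 1%N, a & r] * TT tA [:: 1%N, a & r]) =
          tA 1%N * (Wt q (a :: r) * TT (fun k => tA k.+1) (a :: r)).
  have q1 : qint q 1 = 1 by rewrite /qint big_ord1 expr0.
  have f1 : qfact q 1 = 1 by rewrite /qfact big_nat1.
  rewrite q1 mul1r /Wt big_cons f1 invr1 mul1r mulrCA; congr (_ * _).
  rewrite /TT /= big_nat_recl //= addn0; congr (_ * _).
by rewrite g1 g2 -ht1 mulrDl mul1r.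
Qed.
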